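(* With $J(p_0,p_1)$ as in the context, for $p_0,p_1\in X_\infty$ the set $J(p_0,p_1)$ is nonempty if and only if $p_0\ne p_1$. In particular $\hat d_\infty$ is a metric on $X_\infty$.
   Context: Standing construction ($n=2$). Fix an integer $L\ge100$, $m=4$, $m_v=3L$. For $j\in\mathbb Z$, $Y_j$ is the cell complex on $\mathbb R^2$ given by the tiling by rectangles $[am^{-j},(a+1)m^{-j}]\times[bm_v^{-j},(b+1)m_v^{-j}]$, $a,b\in\mathbb Z$. Let $\Phi(x,y)=(m^{-1}x,m_v^{-1}y)$. For $k,\ell\in\mathbb Z$, $i\in\{1,2,3\}$, $a_{k,\ell,i}=\{k+\tfrac i4\}\times[(3\ell+i-1)m_v^{-1},(3\ell+i)m_v^{-1}]$. $\mathcal R$ is the equivalence relation on $\mathbb R^2$ generated by $p\sim p+(0,m_v^{-1})$ for $p\in a_{k,\ell,i}$. $\Phi^j_*\mathcal R=\{(\Phi^jp,\Phi^jq):(p,q)\in\mathcal R\}$; $\mathcal R_j$ is generated by $\Phi^i_*\mathcal R$, $i<j$; $\mathcal R_\infty$ by all. For $j\in\mathbb Z\cup\{\infty\}$, $X_j=\mathbb R^2/\mathcal R_j$, $\hat\pi^j$ the quotient map, $\pi_j^\infty:X_j\to X_\infty$ the induced map; $X_j$ has the CW structure whose open cells are images of open cells of $Y_j$. $\hat d_\infty$ is the largest pseudodistance on $X_\infty$ such that for every $i\in\mathbb Z$ and every $2$-cell $\hat\sigma$ of $Y_i$, $\hat\pi^\infty(\hat\sigma)$ has diameter $\le m^{-i}$.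 For $p_0,p_1\in X_\infty$, $J(p_0,p_1)$ is the set of $j\in\mathbb Z$ such that there are no intersecting $2$-cells $\sigma_0,\sigma_1$ of $X_j$ with $\sigma_i\cap(\pi_j^\infty)^{-1}(p_i)\ne\emptyset$ for $i=0,1$. *)

(* Defs.v *)
From Stdlib Require Import Reals ZArith Relations.Relation_Operators.
Open Scope R_scope.

Definition R2 : Type := (R * R)%type.

Definition m : R := 4.
Definition mv (L : nat) : R := 3 * INR L.

Definition Phi_pow (L : nat) (j : Z) (p : R2) : R2 :=
  (powerRZ m (- j) * fst p, powerRZ (mv L) (- j) * snd p).

(* the closed rectangle [a m^{-j},(a+1)m^{-j}] x [b mv^{-j},(b+1)mv^{-j}],
   a 2-cell of Y_j *)
Definition in_cell (L : nat) (j a b : Z) (p : R2) : Prop :=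
  IZR a * powerRZ m (- j) <= fst p <= (IZR a + 1) * powerRZ m (- j) /\
  IZR b * powerRZ (mv L) (- j) <= snd p <= (IZR b + 1) * powerRZ (mv L) (- j).

Definition in_a (L : nat) (k l i : Z) (p : R2) : Prop :=
  fst p = IZR k + IZR i / 4 /\
  (3 * IZR l + IZR i - 1) / mv L <= snd p <= (3 * IZR l + IZR i) / mv L.

Definition gen0 (L : nat) (p q : R2) : Prop :=
  exists k l i : Z, (1 <= i <= 3)%Z /\ in_a L k l i p /\
    q = (fst p, snd p + / mv L).

Definition Rel (L : nat) : R2 -> R2 -> Prop := clos_refl_sym_trans R2 (gen0 L).

Definition push (L : nat) (i : Z) (P Q : R2) : Prop :=
  exists p q, Rel L p q /\ P = Phi_pow L i p /\ Q = Phi_pow L i q.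

Definition Rj (L : nat) (j : Z) : R2 -> R2 -> Prop :=
  clos_refl_sym_trans R2 (fun P Q => exists i : Z, (i < j)%Z /\ push L i P Q).

Definition Rinf (L : nat) : R2 -> R2 -> Prop :=
  clos_refl_sym_trans R2 (fun P Q => exists i : Z, push L i P Q).

(* Points of X_j = R^2 / R_j are represented by points of R^2.
   J(p0,p1): j such that there are no intersecting 2-cells sigma_0, sigma_1
   of X_j (images of closed cells of Y_j) with sigma_i meeting the fibre
   (pi_j^infty)^{-1}(p_i). *)
Definition inJ (L : nat) (p0 p1 : R2) (j : Z) : Prop :=
  ~ (exists a0 b0 a1 b1 : Z,
       (exists x y, in_cell L j a0 b0 x /\ in_cell L j a1 b1 y /\ Rj L j x y) /\
       (exists z, in_cell L j a0 b0 z /\ Rinf L z p0) /\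
       (exists w, in_cell L j a1 b1 w /\ Rinf L w p1)).

(* A pseudodistance on X_infinity, given on representatives *)
Definition pseudodist_Xinf (L : nat) (d : R2 -> R2 -> R) : Prop :=
  (forall p p' q q', Rinf L p p' -> Rinf L q q' -> d p q = d p' q') /\
  (forall p q, 0 <= d p q) /\
  (forall p, d p p = 0) /\
  (forall p q, d p q = d q p) /\
  (forall p q r, d p r <= d p q + d q r).

Definition admissible (L : nat) (d : R2 -> R2 -> R) : Prop :=
  pseudodist_Xinf L d /\
  (forall (i a b : Z) (x y : R2), in_cell L i a b x -> in_cell L i a b y ->
     d x y <= powerRZ m (- i)).

Definition is_dhat_inf (L : nat) (d : R2 -> R2 -> R) : Prop :=
  admissible L d /\
  (forall d', admissible L d' -> forall p q, d' p q <= d p q).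

(* Main.v *)
Require Import Defs.
From Stdlib Require Import Reals ZArith.
From Stdlib Require Import Lia Lra Relations.Relation_Operators Classical ClassicalEpsilon.
Open Scope R_scope.

Definition ip (r:R) : Z := Int_part r.

Lemma ip_spec r : IZR (ip r) <= r < IZR (ip r) + 1.
Proof. unfold ip. destruct (base_Int_part r). lra. Qed.

Lemma ip_unique z r : IZR z <= r < IZR z + 1 -> ip r = z.
Proof.
  intros [H1 H2]. unfold ip, Int_part.
  assert (up r = (z+1)%Z). { symmetry; apply tech_up; rewrite plus_IZR; lra. }
  lia.
Qed.

Lemma ip_mono a b : a <= b -> (ip a <= ip b)%Z.
Proof.
  intros H. destruct (ip_spec a), (ip_spec b).
  destruct (Z_le_gt_dec (ip a) (ip b)) as [|Hl]; auto.
  assert (ip b + 1 <= ip a)%Z by lia. apply IZR_le in H4. rewrite plus_IZR in H4. lra.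
Qed.

Lemma ip_plusZ r z : ip (r + IZR z) = (ip r + z)%Z.
Proof. apply ip_unique. rewrite plus_IZR. destruct (ip_spec r). lra. Qed.

Lemma ip_IZR z : ip (IZR z) = z.
Proof. apply ip_unique. lra. Qed.

Lemma IZR_between_false (a b : Z) : IZR a < IZR b < IZR a + 1 -> False.
Proof.
  intros [H1 H2]. apply lt_IZR in H1. rewrite <- plus_IZR in H2. apply lt_IZR in H2. lia.
Qed.

Definition tau (t:R) : R :=
  3 * IZR (ip (t/3)) + 3 * Rmax 0 (t - 3 * IZR (ip (t/3)) - 2).

Lemma tau_q t : 3 * IZR (ip (t/3)) <= t < 3 * IZR (ip (t/3)) + 3.
Proof. destruct (ip_spec (t/3)). lra. Qed.

Lemma tau_near t : Rabs (tau t - t) <= 2.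
Proof.
  unfold tau. destruct (tau_q t). set (q := IZR (ip (t/3))) in *.
  unfold Rmax; destruct (Rle_dec 0 _); apply Rabs_le; lra.
Qed.

Lemma tau_lip_ord t1 t2 : t1 <= t2 -> 0 <= tau t2 - tau t1 <= 3 * (t2 - t1).
Proof.
  intros H. unfold tau. destruct (tau_q t1) as [a1 a2], (tau_q t2) as [b1 b2].
  assert (Hm := ip_mono (t1/3) (t2/3) ltac:(lra)).
  set (q1 := ip (t1/3)) in *. set (q2 := ip (t2/3)) in *.
  destruct (Z.eq_dec q1 q2) as [E|E].
  - rewrite E in *. set (q := IZR q2) in *.
    unfold Rmax; repeat destruct (Rle_dec _ _); lra.
  - assert (q1 + 1 <= q2)%Z by lia. apply IZR_le in H0. rewrite plus_IZR in H0.
    set (x1 := IZR q1) in *. set (x2 := IZR q2) in *.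
    unfold Rmax; repeat destruct (Rle_dec _ _); lra.
Qed.

Lemma tau_lip t1 t2 : Rabs (tau t1 - tau t2) <= 3 * Rabs (t1 - t2).
Proof.
  destruct (Rle_dec t1 t2) as [H|H].
  - destruct (tau_lip_ord t1 t2 H). rewrite Rabs_left1 by lra. rewrite Rabs_left1 by lra. lra.
  - destruct (tau_lip_ord t2 t1 ltac:(lra)). rewrite Rabs_right by lra. rewrite Rabs_right by lra. lra.
Qed.

Lemma tau_window (l:Z) t : 3 * IZR l <= t <= 3 * IZR l + 2 -> tau t = 3 * IZR l.
Proof.
  intros H. unfold tau. rewrite (ip_unique l (t/3)) by lra.
  unfold Rmax; destruct (Rle_dec 0 _); lra.
Qed.

Lemma tau_eq_inv t1 t2 : tau t1 = tau t2 ->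
  t1 = t2 \/ exists l:Z, 3 * IZR l <= t1 <= 3 * IZR l + 2 /\ 3 * IZR l <= t2 <= 3 * IZR l + 2.
Proof.
  unfold tau. destruct (tau_q t1) as [a1 a2], (tau_q t2) as [b1 b2].
  set (q1 := ip (t1/3)) in *. set (q2 := ip (t2/3)) in *. intros E.
  unfold Rmax in E; destruct (Rle_dec 0 (t1 - 3 * IZR q1 - 2)) as [r1|r1];
   destruct (Rle_dec 0 (t2 - 3 * IZR q2 - 2)) as [r2|r2].
  - destruct (Z.eq_dec q1 q2) as [e|e].
    + left. rewrite e in E. lra.
    + exfalso. destruct (Z_lt_le_dec q1 q2).
      * apply (IZR_between_false q1 q2). split. apply IZR_lt; lia. lra.
      * apply (IZR_between_false q2 q1). split. apply IZR_lt; lia. lra.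
  - destruct (Z.eq_dec q1 q2) as [e|e].
    + right. exists q2. rewrite e in *. lra.
    + exfalso. destruct (Z_lt_le_dec q1 q2).
      * apply (IZR_between_false q1 q2). split. apply IZR_lt; lia. lra.
      * assert (IZR q2 < IZR q1) by (apply IZR_lt; lia). lra.
  - destruct (Z.eq_dec q1 q2) as [e|e].
    + right. exists q2. rewrite e in *. lra.
    + exfalso. destruct (Z_lt_le_dec q2 q1).
      * apply (IZR_between_false q2 q1). split. apply IZR_lt; lia. lra.
      * assert (IZR q1 < IZR q2) by (apply IZR_lt; lia). lra.
  - right. assert (IZR q1 = IZR q2) by lra. apply eq_IZR in H. exists q1. rewrite H in *. lra.
Qed.

Definition dZ (t:R) : R := Rmin (t - IZR (ip t)) (IZR (ip t) + 1 - t).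

Lemma dZ_le_int t (n:Z) : dZ t <= Rabs (t - IZR n).
Proof.
  unfold dZ. destruct (ip_spec t).
  destruct (Z_le_gt_dec n (ip t)).
  - apply IZR_le in l. rewrite Rabs_right by lra. unfold Rmin; destruct (Rle_dec _ _); lra.
  - assert (ip t + 1 <= n)%Z by lia. apply IZR_le in H1. rewrite plus_IZR in H1.
    rewrite Rabs_left1 by lra. unfold Rmin; destruct (Rle_dec _ _); lra.
Qed.

Lemma dZ_attained t : exists n:Z, dZ t = Rabs (t - IZR n).
Proof.
  unfold dZ. destruct (ip_spec t). unfold Rmin; destruct (Rle_dec _ _).
  - exists (ip t). rewrite Rabs_right; lra.
  - exists (ip t + 1)%Z. rewrite plus_IZR. rewrite Rabs_left1; lra.
Qed.

Lemma dZ_lip a b : Rabs (dZ a - dZ b) <= Rabs (a - b).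
Proof.
  destruct (dZ_attained a) as [na Ha]. destruct (dZ_attained b) as [nb Hb].
  assert (h1 := dZ_le_int a nb). assert (h2 := dZ_le_int b na).
  assert (h3 := Rabs_triang (a - b) (b - IZR nb)).
  assert (h4 := Rabs_triang (b - a) (a - IZR na)).
  replace (a - b + (b - IZR nb)) with (a - IZR nb) in h3 by ring.
  replace (b - a + (a - IZR na)) with (b - IZR na) in h4 by ring.
  rewrite (Rabs_minus_sym b a) in h4.
  apply Rabs_le; lra.
Qed.

Lemma dZ_nonneg t : 0 <= dZ t.
Proof. destruct (dZ_attained t) as [n H]; rewrite H; apply Rabs_pos. Qed.

Lemma dZ_plus1 t : dZ (t + 1) = dZ t.
Proof. unfold dZ. replace 1 with (IZR 1) at 1 by reflexivity. rewrite ip_plusZ, plus_IZR. f_equal; ring. Qed.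

Lemma dZ_zero t : dZ t = 0 -> t = IZR (ip t).
Proof. unfold dZ. destruct (ip_spec t). unfold Rmin; destruct (Rle_dec _ _); lra. Qed.

Lemma Rabs_le_inv x y : Rabs x <= y -> -y <= x <= y.
Proof. unfold Rabs; destruct (Rcase_abs x); intros; lra. Qed.

Lemma p4nz : (4:R) <> 0. Proof. lra. Qed.

Lemma powerRZ4_nonneg (e:Z) : (0 <= e)%Z -> powerRZ 4 e = IZR (4 ^ e).
Proof.
  intros H. rewrite <- (Z2Nat.id e H). rewrite <- pow_powerRZ.
  replace 4 with (IZR 4) by reflexivity. rewrite pow_IZR. reflexivity.
Qed.

Definition lineX (k kk i : Z) : R := powerRZ 4 (-k) * (IZR kk + IZR i / 4).

Lemma lineX_mul e k kk i : powerRZ 4 e * lineX k kk i = powerRZ 4 (e - k - 1) * IZR (4*kk+i).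
Proof.
  unfold lineX. rewrite <- Rmult_assoc, <- powerRZ_add by lra.
  replace (e + - k)%Z with ((e - k - 1) + 1)%Z by ring. rewrite powerRZ_add by lra.
  rewrite plus_IZR, mult_IZR. simpl. field.
Qed.

Lemma lineX_int e k kk i : (k + 1 <= e)%Z ->
  powerRZ 4 e * lineX k kk i = IZR (4 ^ (e - k - 1) * (4*kk+i)).
Proof.
  intros H. rewrite lineX_mul, powerRZ4_nonneg by lia. rewrite mult_IZR. reflexivity.
Qed.

Lemma lineX_unique k kk i k' kk' i' : (1 <= i <= 3)%Z -> (1 <= i' <= 3)%Z ->
  lineX k kk i = lineX k' kk' i' -> k = k' /\ i = i'.
Proof.
  intros Hi Hi' E.
  assert (G: forall k kk i k' kk' i', (1 <= i <= 3)%Z -> (1 <= i' <= 3)%Z -> (k <= k')%Z ->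
     lineX k kk i = lineX k' kk' i' -> k = k' /\ i = i').
  { clear. intros k kk i k' kk' i' Hi Hi' Hk E.
    assert (E2: powerRZ 4 (k'+1) * lineX k kk i = powerRZ 4 (k'+1) * lineX k' kk' i') by (rewrite E; reflexivity).
    rewrite !lineX_int in E2 by lia. apply eq_IZR in E2.
    replace (k' + 1 - k' - 1)%Z with 0%Z in E2 by ring. rewrite Z.pow_0_r in E2.
    destruct (Z.eq_dec k k') as [e|e].
    - assert (Hz: (k' + 1 - k - 1 = 0)%Z) by lia. rewrite Hz, Z.pow_0_r in E2. split; [auto|lia].
    - exfalso. replace (k' + 1 - k - 1)%Z with (Z.succ (k' - k - 1)) in E2 by ring.
      rewrite Z.pow_succ_r in E2 by lia. lia. }
  destruct (Z_le_gt_dec k k').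
  - eapply G; eauto.
  - destruct (G k' kk' i' k kk i); auto. lia.
Qed.

Lemma gap_lemma (x0:R) (K:Z) : exists r, 0 < r /\
  forall z:Z, IZR z * powerRZ 4 (-K) <> x0 -> r <= Rabs (IZR z * powerRZ 4 (-K) - x0).
Proof.
  set (c := powerRZ 4 (-K)). assert (Hc: 0 < c) by (apply powerRZ_lt; lra).
  set (u0 := x0 / c).
  assert (Hx: forall z:Z, Rabs (IZR z * c - x0) = c * Rabs (IZR z - u0)).
  { intros z. unfold u0. replace (IZR z * c - x0) with (c * (IZR z - x0/c)) by (field; lra).
    rewrite Rabs_mult, (Rabs_right c) by lra. reflexivity. }
  destruct (Req_dec (dZ u0) 0) as [D|D].
  - exists c. split; auto. intros z Hz. rewrite Hx.
    assert (Hu := dZ_zero _ D). set (n := ip u0) in *.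
    assert (z <> n). { intros ->. apply Hz. unfold u0 in Hu. rewrite <- Hu. field. lra. }
    rewrite Hu. destruct (Z_lt_le_dec z n).
    + assert (z + 1 <= n)%Z by lia. apply IZR_le in H0. rewrite plus_IZR in H0.
      rewrite Rabs_left1 by lra. nra.
    + assert (n + 1 <= z)%Z by lia. apply IZR_le in H0. rewrite plus_IZR in H0.
      rewrite Rabs_right by lra. nra.
  - exists (c * dZ u0). split. { apply Rmult_lt_0_compat; auto. destruct (dZ_nonneg u0); lra. }
    intros z _. rewrite Hx. apply Rmult_le_compat_l; [lra|].
    rewrite Rabs_minus_sym. apply dZ_le_int.
Qed.

Lemma lineX_coarse K k kk i : (k < K)%Z ->
  lineX k kk i = IZR (4 ^ (K - k - 1) * (4*kk+i)) * powerRZ 4 (-K).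
Proof.
  intros H. rewrite <- (lineX_int K) by lia. rewrite Rmult_comm, <- Rmult_assoc.
  rewrite <- powerRZ_add by lra. replace (-K + K)%Z with 0%Z by ring. simpl. ring.
Qed.

Definition dl (L:nat) (k:Z) : R := powerRZ (mv L) (-k) / mv L.

Lemma dl_pos L k : 0 < mv L -> 0 < dl L k.
Proof. intros H. unfold dl. apply Rdiv_lt_0_compat; auto. apply powerRZ_lt; auto. Qed.

Definition piF (L:nat) (k s:Z) (y:R) : R :=
  dl L k * (tau (y / dl L k - (IZR s - 1)) + (IZR s - 1)).

Lemma piF_near L k s y : 0 < mv L -> Rabs (piF L k s y - y) <= 2 * dl L k.
Proof.
  intros H. assert (Hd := dl_pos L k H). unfold piF.
  set (d := dl L k) in *. set (t := y / d - (IZR s - 1)).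
  replace (d * (tau t + (IZR s - 1)) - y) with (d * (tau t - t)) by (unfold t; field; lra).
  rewrite Rabs_mult, Rabs_right by lra. assert (h:= tau_near t). nra.
Qed.

Lemma piF_lip L k s y1 y2 : 0 < mv L -> Rabs (piF L k s y1 - piF L k s y2) <= 3 * Rabs (y1 - y2).
Proof.
  intros H. assert (Hd := dl_pos L k H). unfold piF.
  set (d := dl L k) in *.
  set (t1 := y1 / d - (IZR s - 1)). set (t2 := y2 / d - (IZR s - 1)).
  replace (d * (tau t1 + (IZR s - 1)) - d * (tau t2 + (IZR s - 1))) with (d * (tau t1 - tau t2)) by ring.
  assert (E: y1 - y2 = d * (t1 - t2)) by (unfold t1, t2; field; lra).
  rewrite E, !Rabs_mult, Rabs_right by lra. assert (h := tau_lip t1 t2). nra.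
Qed.

Lemma piF_window L k (l i:Z) y : 0 < mv L ->
  (3 * IZR l + IZR i - 1) / mv L <= y <= (3 * IZR l + IZR i) / mv L ->
  piF L k i (powerRZ (mv L) (-k) * y) = piF L k i (powerRZ (mv L) (-k) * (y + / mv L)).
Proof.
  intros H Hy. unfold piF, dl. assert (Hp: 0 < powerRZ (mv L) (-k)) by (apply powerRZ_lt; auto).
  f_equal. f_equal.
  replace (powerRZ (mv L) (- k) * y / (powerRZ (mv L) (- k) / mv L) - (IZR i - 1)) with (y * mv L - (IZR i - 1)) by (field; lra).
  replace (powerRZ (mv L) (- k) * (y + / mv L) / (powerRZ (mv L) (- k) / mv L) - (IZR i - 1)) with ((y * mv L - (IZR i - 1)) + 1) by (field; lra).
  assert (3 * IZR l + IZR i - 1 <= y * mv L <= 3 * IZR l + IZR i).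
  { destruct Hy as [a b].
    apply (Rmult_le_compat_r (mv L)) in a; [|lra]. apply (Rmult_le_compat_r (mv L)) in b; [|lra].
    replace ((3 * IZR l + IZR i - 1) / mv L * mv L) with (3 * IZR l + IZR i - 1) in a by (field; lra).
    replace ((3 * IZR l + IZR i) / mv L * mv L) with (3 * IZR l + IZR i) in b by (field; lra). lra. }
  rewrite (tau_window l) by lra. rewrite (tau_window l) by lra. reflexivity.
Qed.

Definition rnd (u:R) : Z := ip (u + /2).

Lemma rnd_spec u : IZR (rnd u) - /2 <= u < IZR (rnd u) + /2.
Proof. unfold rnd. destruct (ip_spec (u + /2)). lra. Qed.

Lemma rnd_IZR z : rnd (IZR z) = z.
Proof. unfold rnd. apply ip_unique. lra. Qed.

Definition corr (L:nat) (k:Z) (g:R2 -> R) (z:R2) : R :=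
  let u := powerRZ 4 (k+1) * fst z in
  let n := rnd u in
  if Z.eq_dec (n mod 4) 0 then 0 else
  Rmax 0 (1 - 4 * Rabs (u - IZR n)) *
   (g (IZR n / powerRZ 4 (k+1), piF L k (n mod 4) (snd z)) - g (IZR n / powerRZ 4 (k+1), snd z)).

Lemma beta_range e : 0 <= Rmax 0 (1 - 4 * Rabs e) <= 1.
Proof. unfold Rmax; destruct (Rle_dec _ _); split; try lra; assert (h:=Rabs_pos e); lra. Qed.

Definition LipY (g:R2->R) (Lg:R) := forall x y1 y2, Rabs (g (x,y1) - g (x,y2)) <= Lg * Rabs (y1 - y2).

Lemma corr_lipy L k g Lg : 0 < mv L -> 0 <= Lg -> LipY g Lg -> LipY (corr L k g) (4 * Lg).
Proof.
  intros Hm HL Hg x y1 y2. unfold corr. simpl.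
  destruct (Z.eq_dec _ 0). { rewrite Rminus_0_r, Rabs_R0. assert (h:=Rabs_pos (y1-y2)). nra. }
  set (b := Rmax _ _). assert (Hb := beta_range (powerRZ 4 (k + 1) * x - IZR (rnd (powerRZ 4 (k + 1) * x)))).
  fold b in Hb. set (X := IZR _ / _). set (s := (_ mod 4)%Z).
  rewrite <- Rmult_minus_distr_l, Rabs_mult, (Rabs_right b) by lra.
  assert (h1 := Hg X (piF L k s y1) (piF L k s y2)).
  assert (h2 := Hg X y1 y2). assert (h3 := piF_lip L k s y1 y2 Hm).
  assert (h4 := Rabs_triang (g (X, piF L k s y1) - g (X, piF L k s y2)) (- (g (X, y1) - g (X, y2)))).
  rewrite Rabs_Ropp in h4.
  replace (g (X, piF L k s y1) - g (X, y1) - (g (X, piF L k s y2) - g (X, y2))) with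
    (g (X, piF L k s y1) - g (X, piF L k s y2) + - (g (X, y1) - g (X, y2))) by ring.
  assert (h5: Rabs (g (X, piF L k s y1) - g (X, piF L k s y2) + - (g (X, y1) - g (X, y2))) <= 4 * Lg * Rabs (y1 - y2)) by nra.
  assert (h6 := Rabs_pos (g (X, piF L k s y1) - g (X, piF L k s y2) + - (g (X, y1) - g (X, y2)))).
  nra.
Qed.

Lemma corr_amp L k g Lg : 0 < mv L -> 0 <= Lg -> LipY g Lg -> forall z, Rabs (corr L k g z) <= 2 * Lg * dl L k.
Proof.
  intros Hm HL Hg [x y]. assert (Hd := dl_pos L k Hm). unfold corr. simpl.
  destruct (Z.eq_dec _ 0). { rewrite Rabs_R0. nra. }
  set (b := Rmax _ _). assert (Hb := beta_range (powerRZ 4 (k + 1) * x - IZR (rnd (powerRZ 4 (k + 1) * x)))).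
  fold b in Hb. set (X := IZR _ / _). set (s := (_ mod 4)%Z).
  rewrite Rabs_mult, (Rabs_right b) by lra.
  assert (h1 := Hg X (piF L k s y) y). assert (h2 := piF_near L k s y Hm).
  assert (h3 := Rabs_pos (g (X, piF L k s y) - g (X, y))). nra.
Qed.

Lemma beta_bound_switch (u1 u2:R) : rnd u1 <> rnd u2 -> Rmax 0 (1 - 4 * Rabs (u1 - IZR (rnd u1))) <= 4 * Rabs (u1 - u2).
Proof.
  intros H. destruct (rnd_spec u1), (rnd_spec u2).
  assert (Hd: / 2 - Rabs (u1 - IZR (rnd u1)) <= Rabs (u1 - u2)).
  { destruct (Z_lt_le_dec (rnd u1) (rnd u2)).
    - assert (rnd u1 + 1 <= rnd u2)%Z by lia. apply IZR_le in H4. rewrite plus_IZR in H4.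
      assert (h' := Rle_abs (u1 - IZR (rnd u1))). rewrite (Rabs_left1 (u1 - u2)) by lra. lra.
    - assert (rnd u2 + 1 <= rnd u1)%Z by lia. apply IZR_le in H4. rewrite plus_IZR in H4.
      assert (h' := Rle_abs (IZR (rnd u1) - u1)). rewrite Rabs_minus_sym in h'. rewrite (Rabs_right (u1 - u2)) by lra. lra. }
  unfold Rmax; destruct (Rle_dec _ _); assert (h := Rabs_pos (u1 - u2)); lra.
Qed.

Lemma corr_lipx L k g Lg : 0 < mv L -> 0 <= Lg -> LipY g Lg -> forall x1 x2 y,
  Rabs (corr L k g (x1,y) - corr L k g (x2,y)) <= 8 * (2 * Lg * dl L k) * powerRZ 4 (k+1) * Rabs (x1 - x2).
Proof.
  intros Hm HL Hg x1 x2 y.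
  assert (Hd := dl_pos L k Hm). assert (Hp: 0 < powerRZ 4 (k+1)) by (apply powerRZ_lt; lra).
  set (A := 2 * Lg * dl L k).
  set (u1 := powerRZ 4 (k+1) * x1). set (u2 := powerRZ 4 (k+1) * x2).
  assert (Hu: Rabs (u1 - u2) = powerRZ 4 (k+1) * Rabs (x1 - x2)).
  { unfold u1, u2. rewrite <- Rmult_minus_distr_l, Rabs_mult, Rabs_right by lra. reflexivity. }
  replace (8 * A * powerRZ 4 (k + 1) * Rabs (x1 - x2)) with (8 * A * Rabs (u1 - u2)) by (rewrite Hu; ring).
  assert (GA: forall X s, Rabs (g (X, piF L k s y) - g (X, y)) <= A).
  { intros X s. assert (h1 := Hg X (piF L k s y) y). assert (h2 := piF_near L k s y Hm).
    unfold A. assert (h3 := Rabs_pos (piF L k s y - y)). nra. }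
  assert (Hc: forall x, Rabs (corr L k g (x,y)) <= Rmax 0 (1 - 4 * Rabs (powerRZ 4 (k+1) * x - IZR (rnd (powerRZ 4 (k+1) * x)))) * A).
  { intros x. unfold corr; simpl. destruct (Z.eq_dec _ 0).
    - rewrite Rabs_R0. assert (h := beta_range (powerRZ 4 (k+1) * x - IZR (rnd (powerRZ 4 (k+1) * x)))).
      assert (0 <= A) by (unfold A; nra). nra.
    - rewrite Rabs_mult, Rabs_right by (apply Rle_ge, beta_range). apply Rmult_le_compat_l. apply beta_range. apply GA. }
  assert (HA: 0 <= A) by (unfold A; nra).
  destruct (Z.eq_dec (rnd u1) (rnd u2)) as [E|E].
  - unfold corr; simpl. fold u1 u2. rewrite E.
    destruct (Z.eq_dec _ 0). { rewrite Rminus_0_r, Rabs_R0. assert (h:=Rabs_pos (u1-u2)). nra. }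
    rewrite <- Rmult_minus_distr_r, Rabs_mult.
    set (nn := rnd u2).
    assert (Hbb: Rabs (Rmax 0 (1 - 4 * Rabs (u1 - IZR nn)) - Rmax 0 (1 - 4 * Rabs (u2 - IZR nn))) <= 4 * Rabs (u1 - u2)).
    { assert (h := Rabs_triang_inv (u1 - IZR nn) (u2 - IZR nn)).
      assert (h' := Rabs_triang_inv (u2 - IZR nn) (u1 - IZR nn)).
      replace (u1 - IZR nn - (u2 - IZR nn)) with (u1 - u2) in h by ring.
      replace (u2 - IZR nn - (u1 - IZR nn)) with (u2 - u1) in h' by ring.
      rewrite (Rabs_minus_sym u2 u1) in h'.
      unfold Rmax; repeat destruct (Rle_dec _ _); apply Rabs_le; lra. }
    assert (h := GA (IZR nn / powerRZ 4 (k + 1)) (nn mod 4)%Z).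
    assert (h2 := Rabs_pos (Rmax 0 (1 - 4 * Rabs (u1 - IZR nn)) - Rmax 0 (1 - 4 * Rabs (u2 - IZR nn)))).
    assert (h3 := Rabs_pos (g (IZR nn / powerRZ 4 (k + 1), piF L k (nn mod 4) y) - g (IZR nn / powerRZ 4 (k + 1), y))).
    nra.
  - assert (h1 := Hc x1). assert (h2 := Hc x2). fold u1 u2 in h1, h2.
    assert (b1 := beta_bound_switch u1 u2 E).
    assert (b2 := beta_bound_switch u2 u1 (not_eq_sym E)). rewrite (Rabs_minus_sym u2 u1) in b2.
    assert (h := Rabs_triang (corr L k g (x1, y)) (- corr L k g (x2, y))). rewrite Rabs_Ropp in h.
    replace (corr L k g (x1, y) + - corr L k g (x2, y)) with (corr L k g (x1, y) - corr L k g (x2, y)) in h by ring.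
    assert (0 <= Rmax 0 (1 - 4 * Rabs (u1 - IZR (rnd u1)))) by apply beta_range.
    assert (h5: Rmax 0 (1 - 4 * Rabs (u1 - IZR (rnd u1))) * A <= 4 * Rabs (u1 - u2) * A) by (apply Rmult_le_compat_r; auto).
    assert (h6: Rmax 0 (1 - 4 * Rabs (u2 - IZR (rnd u2))) * A <= 4 * Rabs (u1 - u2) * A) by (apply Rmult_le_compat_r; auto).
    lra.
Qed.

Lemma corr_line_fine L k k' kk i g y : (1 <= i <= 3)%Z -> (k < k')%Z ->
  corr L k' g (lineX k kk i, y) = 0.
Proof.
  intros Hi Hk. unfold corr; simpl. rewrite lineX_int by lia. rewrite rnd_IZR.
  destruct (Z.eq_dec _ 0) as [|n]; auto. exfalso. apply n.
  replace (k' + 1 - k - 1)%Z with (Z.succ (k' - k - 1)) by ring. rewrite Z.pow_succ_r by lia.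
  rewrite <- Z.mul_assoc, Z.mul_comm. apply Z_mod_mult.
Qed.

Lemma corr_line_same L k kk i g y : (1 <= i <= 3)%Z ->
  corr L k g (lineX k kk i, y) = g (lineX k kk i, piF L k i y) - g (lineX k kk i, y).
Proof.
  intros Hi. unfold corr; simpl. rewrite lineX_int by lia. rewrite rnd_IZR.
  replace (k + 1 - k - 1)%Z with 0%Z by ring. rewrite Z.pow_0_r, Z.mul_1_l.
  assert (Hm: ((4 * kk + i) mod 4 = i)%Z).
  { rewrite Z.add_comm, Z.mul_comm, Z_mod_plus_full. apply Z.mod_small. lia. }
  rewrite Hm. destruct (Z.eq_dec i 0). lia.
  rewrite Rminus_diag, Rabs_R0, Rmult_0_r, Rminus_0_r.
  replace (Rmax 0 1) with 1 by (unfold Rmax; destruct (Rle_dec 0 1); lra).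
  assert (E: IZR (4 * kk + i) / powerRZ 4 (k + 1) = lineX k kk i).
  { assert (E0 := lineX_int (k+1) k kk i ltac:(lia)). replace (k+1-k-1)%Z with 0%Z in E0 by ring.
    rewrite Z.pow_0_r, Z.mul_1_l in E0. rewrite <- E0. field. apply powerRZ_NOR. lra. }
  rewrite E. ring.
Qed.

Fixpoint Sn (L K:nat) (b:R2->R) (n:nat) : R2 -> R :=
  match n with
  | O => b
  | S n' => fun z => Sn L K b n' z + corr L (Z.of_nat (K + n')) (Sn L K b n') z
  end.

Lemma dl_nat L N : 0 < mv L -> dl L (Z.of_nat N) = / mv L ^ (S N).
Proof.
  intros H. unfold dl. rewrite powerRZ_neg', <- pow_powerRZ. simpl.
  assert (mv L ^ N <> 0) by (apply pow_nonzero; lra). assert (mv L <> 0) by lra. field. tauto.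
Qed.

Lemma Sn_lipy L K b L0 n : 0 < mv L -> 0 <= L0 -> LipY b L0 -> LipY (Sn L K b n) (L0 * 5 ^ n).
Proof.
  intros Hm H0 Hb. induction n as [|n IH].
  - simpl. rewrite Rmult_1_r. auto.
  - assert (Hp: 0 <= L0 * 5 ^ n) by (apply Rmult_le_pos; auto; apply pow_le; lra).
    assert (Hc := corr_lipy L (Z.of_nat (K + n)) (Sn L K b n) _ Hm Hp IH).
    intros x y1 y2. simpl.
    assert (h1 := IH x y1 y2). assert (h2 := Hc x y1 y2).
    set (c1 := corr _ _ _ (x,y1)) in *. set (c2 := corr _ _ _ (x,y2)) in *.
    assert (h3 := Rabs_triang (Sn L K b n (x, y1) - Sn L K b n (x, y2)) (c1 - c2)).
    replace (Sn L K b n (x, y1) - Sn L K b n (x, y2) + (c1 - c2)) with (Sn L K b n (x, y1) + c1 - (Sn L K b n (x, y2) + c2)) in h3 by ring.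
    lra.
Qed.

Definition rho L := 5 / mv L.
Definition a0 L K L0 := 2 * L0 / mv L ^ (K+1).

Lemma corr_Sn_amp L K b L0 n z : 0 < mv L -> 0 <= L0 -> LipY b L0 ->
  Rabs (corr L (Z.of_nat (K + n)) (Sn L K b n) z) <= a0 L K L0 * rho L ^ n.
Proof.
  intros Hm H0 Hb.
  assert (Hp: 0 <= L0 * 5 ^ n) by (apply Rmult_le_pos; auto; apply pow_le; lra).
  assert (h := corr_amp L (Z.of_nat (K + n)) (Sn L K b n) _ Hm Hp (Sn_lipy L K b L0 n Hm H0 Hb) z).
  rewrite dl_nat in h by auto. unfold a0, rho.
  replace (2 * (L0 * 5 ^ n) * / mv L ^ S (K + n)) with (2 * L0 / mv L ^ (K + 1) * (5 / mv L) ^ n) in h; auto.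
  unfold Rdiv. rewrite Rpow_mult_distr, pow_inv. replace (S (K+n)) with ((K+1) + n)%nat by lia.
  rewrite (pow_add (mv L) (K+1) n). rewrite Rinv_mult. ring.
Qed.

Lemma rho_small L : 300 <= mv L -> 0 < rho L <= /60.
Proof. intros H. unfold rho. split. apply Rdiv_lt_0_compat; lra.
  apply (Rmult_le_reg_r (mv L)); [lra|]. unfold Rdiv. rewrite Rmult_assoc, Rinv_l by lra. lra. Qed.

Lemma a0_nonneg L K L0 : 0 < mv L -> 0 <= L0 -> 0 <= a0 L K L0.
Proof. intros. unfold a0. apply Rmult_le_pos; [lra|]. apply Rlt_le, Rinv_0_lt_compat, pow_lt; lra. Qed.

Lemma Sn_diff L K b L0 m d z : 300 <= mv L -> 0 <= L0 -> LipY b L0 ->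
  Rabs (Sn L K b (m + d) z - Sn L K b m z) <= 2 * a0 L K L0 * rho L ^ m - 2 * a0 L K L0 * rho L ^ (m + d).
Proof.
  intros Hm H0 Hb. assert (Hm' : 0 < mv L) by lra.
  assert (Hr := rho_small L Hm). assert (Ha := a0_nonneg L K L0 Hm' H0).
  induction d as [|d IH].
  - rewrite Nat.add_0_r, Rminus_diag, Rabs_R0. lra.
  - replace (m + S d)%nat with (S (m + d)) by lia. simpl Sn.
    assert (h := corr_Sn_amp L K b L0 (m + d) z Hm' H0 Hb).
    set (c := corr _ _ _ z) in *.
    assert (h3 := Rabs_triang (Sn L K b (m + d) z - Sn L K b m z) c).
    replace (Sn L K b (m + d) z - Sn L K b m z + c) with (Sn L K b (m + d) z + c - Sn L K b m z) in h3 by ring.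
    simpl pow. assert (0 <= rho L ^ (m + d)) by (apply pow_le; lra).
    assert (0 <= a0 L K L0 * rho L ^ (m + d)) by (apply Rmult_le_pos; lra).
    nra.
Qed.

Lemma Sn_diff' L K b L0 m n z : 300 <= mv L -> 0 <= L0 -> LipY b L0 -> (m <= n)%nat ->
  Rabs (Sn L K b n z - Sn L K b m z) <= 2 * a0 L K L0 * rho L ^ m.
Proof.
  intros Hm H0 Hb Hmn. replace n with (m + (n - m))%nat by lia.
  assert (h := Sn_diff L K b L0 m (n - m) z Hm H0 Hb).
  assert (0 <= rho L ^ (m + (n-m))) by (apply pow_le; destruct (rho_small L Hm); lra).
  assert (Ha := a0_nonneg L K L0 ltac:(lra) H0). nra.
Qed.

Definition fF L K b (z:R2) : R := epsilon (inhabits 0) (fun l => Un_cv (fun n => Sn L K b n z) l).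

Lemma fF_cv L K b L0 z : 300 <= mv L -> 0 <= L0 -> LipY b L0 ->
  Un_cv (fun n => Sn L K b n z) (fF L K b z).
Proof.
  intros Hm H0 Hb. unfold fF. apply epsilon_spec.
  assert (Hc: Cauchy_crit (fun n => Sn L K b n z)).
  { intros eps He. destruct (rho_small L Hm) as [r1 r2].
    assert (Ha := a0_nonneg L K L0 ltac:(lra) H0).
    destruct (pow_lt_1_zero (rho L) ltac:(rewrite Rabs_right; lra) (eps / (4 * a0 L K L0 + 1))) as [N HN].
    { apply Rdiv_lt_0_compat; lra. }
    exists N. intros n1 n2 h1 h2. unfold R_dist.
    assert (e1 := Sn_diff' L K b L0 N n1 z Hm H0 Hb h1).
    assert (e2 := Sn_diff' L K b L0 N n2 z Hm H0 Hb h2).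
    assert (hN := HN N (le_n N)). rewrite Rabs_right in hN by (apply Rle_ge, pow_le; lra).
    assert (h3 := Rabs_triang (Sn L K b n1 z - Sn L K b N z) (Sn L K b N z - Sn L K b n2 z)).
    replace (Sn L K b n1 z - Sn L K b N z + (Sn L K b N z - Sn L K b n2 z)) with (Sn L K b n1 z - Sn L K b n2 z) in h3 by ring.
    rewrite (Rabs_minus_sym (Sn L K b N z)) in h3.
    assert (hh: (4 * a0 L K L0 + 1) * rho L ^ N < eps).
    { apply (Rmult_lt_compat_l (4 * a0 L K L0 + 1)) in hN; [|lra].
      replace ((4 * a0 L K L0 + 1) * (eps / (4 * a0 L K L0 + 1))) with eps in hN by (field; lra). exact hN. }
    assert (0 <= rho L ^N) by (apply pow_le; lra).
    assert (0 <= a0 L K L0 * rho L ^ N) by (apply Rmult_le_pos; lra).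
    nra. }
  destruct (R_complete _ Hc) as [l Hl]. exists l; exact Hl.
Qed.

Lemma cv_const c : Un_cv (fun _ => c) c.
Proof. intros eps He. exists O. intros n _. unfold R_dist. rewrite Rminus_diag, Rabs_R0. lra. Qed.

Lemma lim_abs_bound (u v : nat -> R) l1 l2 B : (forall n, Rabs (u n - v n) <= B) ->
  Un_cv u l1 -> Un_cv v l2 -> Rabs (l1 - l2) <= B.
Proof.
  intros H H1 H2. assert (Hd := CV_minus _ _ _ _ H1 H2).
  apply Rabs_le. split.
  - apply Rle_cv_lim with (Un := fun _ => -B) (Vn := fun i => u i - v i); auto. intros n. destruct (Rabs_le_inv _ _ (H n)); lra.
    apply cv_const.
  - apply Rle_cv_lim with (Un := fun i => u i - v i) (Vn := fun _ => B); auto. intros n. destruct (Rabs_le_inv _ _ (H n)); lra.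
    apply cv_const.
Qed.

Lemma cv_ext_loc (u v : nat -> R) l N : (forall n, (N <= n)%nat -> u n = v n) -> Un_cv u l -> Un_cv v l.
Proof.
  intros H Hu eps He. destruct (Hu eps He) as [N1 HN1]. exists (Nat.max N N1). intros n Hn.
  rewrite <- H by lia. apply HN1. lia.
Qed.

Lemma fF_bound L K b L0 z1 z2 B : 300 <= mv L -> 0 <= L0 -> LipY b L0 ->
  (forall n, Rabs (Sn L K b n z1 - Sn L K b n z2) <= B) -> Rabs (fF L K b z1 - fF L K b z2) <= B.
Proof.
  intros Hm H0 Hb H. apply (lim_abs_bound (fun n => Sn L K b n z1) (fun n => Sn L K b n z2)).
  exact H. exact (fF_cv L K b L0 z1 Hm H0 Hb). exact (fF_cv L K b L0 z2 Hm H0 Hb).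
Qed.

Lemma fF_near_b L K b L0 z : 300 <= mv L -> 0 <= L0 -> LipY b L0 ->
  Rabs (fF L K b z - b z) <= 2 * a0 L K L0.
Proof.
  intros Hm H0 Hb. apply (lim_abs_bound (fun n => Sn L K b n z) (fun _ => b z)).
  2: exact (fF_cv L K b L0 z Hm H0 Hb). 2: apply cv_const.
  intros n. assert (h := Sn_diff' L K b L0 0 n z Hm H0 Hb ltac:(lia)). simpl in h. rewrite Rmult_1_r in h. exact h.
Qed.

Lemma fF_eventually L K b L0 z1 z2 N : 300 <= mv L -> 0 <= L0 -> LipY b L0 ->
  (forall n, (N <= n)%nat -> Sn L K b n z1 = Sn L K b n z2) -> fF L K b z1 = fF L K b z2.
Proof.
  intros Hm H0 Hb H. apply (UL_sequence (fun n => Sn L K b n z2)).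
  - apply (cv_ext_loc (fun n => Sn L K b n z1) _ _ N); auto. exact (fF_cv L K b L0 z1 Hm H0 Hb).
  - exact (fF_cv L K b L0 z2 Hm H0 Hb).
Qed.

Lemma Phi_gen0 L k p q : gen0 L p q -> exists kk l i, (1 <= i <= 3)%Z /\
  (3 * IZR l + IZR i - 1) / mv L <= snd p <= (3 * IZR l + IZR i) / mv L /\
  Phi_pow L k p = (lineX k kk i, powerRZ (mv L) (-k) * snd p) /\
  Phi_pow L k q = (lineX k kk i, powerRZ (mv L) (-k) * (snd p + / mv L)).
Proof.
  intros [kk [l [i [Hi [[Hx Hy] Hq]]]]]. exists kk, l, i. split; auto. split; auto.
  unfold Phi_pow, lineX, m. rewrite Hq. simpl. rewrite Hx. split; reflexivity.
Qed.

Lemma inv_Rinf L (f : R2 -> R) :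
  (forall k p q, gen0 L p q -> f (Phi_pow L k p) = f (Phi_pow L k q)) ->
  forall u v, Rinf L u v -> f u = f v.
Proof.
  intros H u v Huv. induction Huv as [u v [i [p [q [Hr [-> ->]]]]]| | |].
  - induction Hr; auto. congruence.
  - reflexivity.
  - congruence.
  - congruence.
Qed.

Lemma Rinf_fst L u v : Rinf L u v -> fst u = fst v.
Proof.
  intros H. apply (inv_Rinf L fst); auto.
  intros k p q [kk [l [i [Hi [Ha Hq]]]]]. unfold Phi_pow. rewrite Hq. reflexivity.
Qed.

Lemma Sn_S L K b n z : Sn L K b (S n) z = Sn L K b n z + corr L (Z.of_nat (K + n)) (Sn L K b n) z.
Proof. reflexivity. Qed.

Lemma Sn_line_coarse L K b k kk i y n : (1 <= i <= 3)%Z -> (k < Z.of_nat K)%Z ->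
  Sn L K b n (lineX k kk i, y) = b (lineX k kk i, y).
Proof.
  intros Hi Hk. induction n as [|n IH]; simpl; auto.
  rewrite corr_line_fine by lia. rewrite IH. ring.
Qed.

Lemma Sn_line_stable L K b k kk i y n0 d : (1 <= i <= 3)%Z -> (Z.of_nat (K + n0) = k)%Z ->
  Sn L K b (S n0 + d) (lineX k kk i, y) = Sn L K b n0 (lineX k kk i, piF L k i y).
Proof.
  intros Hi Hk. induction d as [|d IH].
  - rewrite Nat.add_0_r. rewrite Sn_S, Hk, corr_line_same by auto. ring.
  - replace (S n0 + S d)%nat with (S (S n0 + d)) by lia. rewrite Sn_S.
    rewrite (corr_line_fine L k (Z.of_nat (K + (S n0 + d)))) by lia.
    rewrite IH. ring.
Qed.

Lemma fF_invariant L K b L0 : 300 <= mv L -> 0 <= L0 -> LipY b L0 ->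
  (forall k p q, (k < Z.of_nat K)%Z -> gen0 L p q -> b (Phi_pow L k p) = b (Phi_pow L k q)) ->
  forall k p q, gen0 L p q -> fF L K b (Phi_pow L k p) = fF L K b (Phi_pow L k q).
Proof.
  intros Hm H0 Hb Hbc k p q Hg.
  destruct (Phi_gen0 L k p q Hg) as [kk [l [i [Hi [Hy [Ep Eq]]]]]].
  destruct (Z_lt_le_dec k (Z.of_nat K)) as [Hk|Hk].
  - apply (fF_eventually L K b L0 _ _ O Hm H0 Hb). intros n _.
    rewrite Ep, Eq, !Sn_line_coarse by auto. rewrite <- Ep, <- Eq. apply Hbc; auto.
  - set (n0 := (Z.to_nat k - K)%nat).
    assert (Hn0: Z.of_nat (K + n0) = k) by (unfold n0; lia).
    apply (fF_eventually L K b L0 _ _ (S n0) Hm H0 Hb). intros n Hn.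
    replace n with (S n0 + (n - S n0))%nat by lia.
    rewrite Ep, Eq, !(Sn_line_stable L K b k kk i _ n0) by auto.
    rewrite (piF_window L k l i) by (auto; lra). reflexivity.
Qed.

Definition LipX (g:R2->R) (M:R) := forall x1 x2 y, Rabs (g (x1,y) - g (x2,y)) <= M * Rabs (x1 - x2).

Definition sig L := 20 / mv L.

Lemma pw_aux L K n : 0 < mv L ->
  5 ^ n * 4 ^ (S (K + n)) * / mv L ^ (S (K + n)) = (4 / mv L) ^ (K+1) * sig L ^ n.
Proof.
  intros H. unfold sig, Rdiv. rewrite !Rpow_mult_distr, !pow_inv.
  replace (S (K+n)) with ((K+1)+n)%nat by lia. rewrite !pow_add.
  replace 20 with (5*4) by ring. rewrite Rpow_mult_distr. rewrite Rinv_mult. ring.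
Qed.

Lemma frac_pow_le1 a N : 0 <= a <= 1 -> a ^ N <= 1.
Proof. intros H. rewrite <- (pow1 N). apply pow_incr. lra. Qed.

Lemma Sn_lipx L K b L0 M0 n : 300 <= mv L -> 0 <= L0 -> 0 <= M0 -> LipY b L0 -> LipX b M0 ->
  LipX (Sn L K b n) (M0 + 32 * L0 * (1 - sig L ^ n)).
Proof.
  intros Hm H0 HM Hb Hbx. assert (Hm' : 0 < mv L) by lra.
  assert (Hs: 0 < sig L <= /2). { unfold sig. split. apply Rdiv_lt_0_compat; lra.
    apply (Rmult_le_reg_r (mv L)); [lra|]. unfold Rdiv. rewrite Rmult_assoc, Rinv_l by lra. lra. }
  induction n as [|n IH].
  - simpl. replace (M0 + 32 * L0 * (1 - 1)) with M0 by ring. auto.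
  - intros x1 x2 y. rewrite !Sn_S.
    assert (Hp: 0 <= L0 * 5 ^ n) by (apply Rmult_le_pos; auto; apply pow_le; lra).
    assert (hc := corr_lipx L (Z.of_nat (K + n)) (Sn L K b n) _ Hm' Hp (Sn_lipy L K b L0 n Hm' H0 Hb) x1 x2 y).
    rewrite dl_nat in hc by auto.
    replace (Z.of_nat (K + n) + 1)%Z with (Z.of_nat (S (K + n))) in hc by lia.
    rewrite <- pow_powerRZ in hc.
    replace (8 * (2 * (L0 * 5 ^ n) * / mv L ^ S (K + n)) * 4 ^ S (K + n)) with
      (16 * L0 * (5 ^ n * 4 ^ (S (K + n)) * / mv L ^ (S (K + n)))) in hc by ring.
    rewrite pw_aux in hc by auto.
    assert (h4: (4 / mv L) ^ (K+1) <= 1).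
    { apply frac_pow_le1. split. apply Rlt_le, Rdiv_lt_0_compat; lra.
      apply (Rmult_le_reg_r (mv L)); [lra|]. unfold Rdiv. rewrite Rmult_assoc, Rinv_l by lra. lra. }
    assert (hs0: 0 <= sig L ^ n) by (apply pow_le; lra).
    assert (h5: 16 * L0 * ((4 / mv L) ^ (K + 1) * sig L ^ n) <= 16 * L0 * sig L ^ n).
    { apply Rmult_le_compat_l; [lra|]. rewrite <- (Rmult_1_l (sig L ^ n)) at 2. apply Rmult_le_compat_r; lra. }
    assert (h1 := IH x1 x2 y).
    assert (ha := Rabs_pos (x1 - x2)).
    set (c1 := corr _ _ _ (x1,y)) in *. set (c2 := corr _ _ _ (x2,y)) in *.
    assert (h3 := Rabs_triang (Sn L K b n (x1, y) - Sn L K b n (x2, y)) (c1 - c2)).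
    replace (Sn L K b n (x1, y) - Sn L K b n (x2, y) + (c1 - c2)) with (Sn L K b n (x1, y) + c1 - (Sn L K b n (x2, y) + c2)) in h3 by ring.
    simpl pow.
    assert (h6: 16 * L0 * sig L ^ n * Rabs (x1 - x2) <= 32 * L0 * (sig L ^ n - sig L * sig L ^ n) * Rabs (x1 - x2)).
    { apply Rmult_le_compat_r; auto. assert (0 <= L0 * sig L ^ n) by (apply Rmult_le_pos; lra). nra. }
    assert (h7: 16 * L0 * ((4 / mv L) ^ (K + 1) * sig L ^ n) * Rabs (x1 - x2) <= 16 * L0 * sig L ^ n * Rabs (x1 - x2)).
    { apply Rmult_le_compat_r; auto. }
    nra.
Qed.

Lemma fF_lipx L K b L0 M0 x1 x2 y : 300 <= mv L -> 0 <= L0 -> 0 <= M0 -> LipY b L0 -> LipX b M0 ->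
  Rabs (fF L K b (x1,y) - fF L K b (x2,y)) <= (M0 + 32 * L0) * Rabs (x1 - x2).
Proof.
  intros Hm H0 HM Hb Hbx. apply (fF_bound L K b L0); auto.
  intros n. assert (h := Sn_lipx L K b L0 M0 n Hm H0 HM Hb Hbx x1 x2 y).
  assert (0 <= sig L ^ n) by (apply pow_le; unfold sig; apply Rlt_le, Rdiv_lt_0_compat; lra).
  assert (ha := Rabs_pos (x1 - x2)).
  assert (0 <= L0 * sig L ^ n * Rabs (x1 - x2)) by (apply Rmult_le_pos; auto; apply Rmult_le_pos; auto).
  lra.
Qed.

Lemma fF_y_fine L K b L0 N x y1 y2 : 300 <= mv L -> 0 <= L0 -> LipY b L0 ->
  Rabs (y1 - y2) <= / mv L ^ (K + N) -> Rabs (fF L K b (x,y1) - fF L K b (x,y2)) <= 2 * L0 * / 4 ^ (K + N).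
Proof.
  intros Hm H0 Hb Hy. assert (Hm' : 0 < mv L) by lra.
  assert (Hp4: 0 < 4 ^ (K+N)) by (apply pow_lt; lra).
  assert (Hpm: 0 < mv L ^ (K+N)) by (apply pow_lt; lra).
  assert (Key: 5 ^ N * 4 ^ (K + N) <= mv L ^ (K + N)).
  { rewrite !pow_add. replace (5 ^ N * (4 ^ K * 4 ^ N)) with (4 ^ K * (5 * 4) ^ N) by (rewrite Rpow_mult_distr; ring).
    apply Rmult_le_compat. apply pow_le; lra. apply pow_le; lra. apply pow_incr; lra. apply pow_incr; lra. }
  assert (T1: L0 * 5 ^ N * / mv L ^ (K + N) <= L0 * / 4 ^ (K + N)).
  { rewrite Rmult_assoc. apply Rmult_le_compat_l; auto.
    apply (Rmult_le_reg_r (mv L ^ (K+N) * 4 ^ (K+N))). nra.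
    replace (5 ^ N * / mv L ^ (K + N) * (mv L ^ (K + N) * 4 ^ (K + N))) with (5 ^ N * 4 ^ (K + N)) by (field; lra).
    replace (/ 4 ^ (K + N) * (mv L ^ (K + N) * 4 ^ (K + N))) with (mv L ^ (K + N)) by (field; lra). auto. }
  assert (T2: 4 * a0 L K L0 * rho L ^ N <= L0 * / 4 ^ (K + N)).
  { unfold a0, rho. unfold Rdiv. rewrite Rpow_mult_distr, pow_inv.
    replace (4 * (2 * L0 * / mv L ^ (K + 1)) * (5 ^ N * / mv L ^ N)) with (L0 * (8 * 5 ^ N * / (mv L ^ (K+N) * mv L))).
    2: { replace (K+1)%nat with (S K) by lia. rewrite (pow_add (mv L) K N). simpl.
         assert (mv L ^ K <> 0) by (apply pow_nonzero; lra). assert (mv L ^ N <> 0) by (apply pow_nonzero; lra).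
         field. repeat split; lra || auto. }
    apply Rmult_le_compat_l; auto.
    apply (Rmult_le_reg_r (mv L ^ (K+N) * mv L * 4 ^ (K+N))). { apply Rmult_lt_0_compat; [apply Rmult_lt_0_compat|]; lra. }
    replace (8 * 5 ^ N * / (mv L ^ (K + N) * mv L) * (mv L ^ (K + N) * mv L * 4 ^ (K + N))) with (8 * (5 ^ N * 4 ^ (K + N))) by (field; lra).
    replace (/ 4 ^ (K + N) * (mv L ^ (K + N) * mv L * 4 ^ (K + N))) with (mv L * mv L ^ (K + N)) by (field; lra).
    assert (0 <= 5 ^ N * 4 ^ (K + N)) by (apply Rmult_le_pos; apply pow_le; lra). nra. }
  apply (fF_bound L K b L0); auto. intros n.
  assert (Hr := rho_small L Hm). assert (Ha := a0_nonneg L K L0 Hm' H0).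
  assert (HyN: forall n', (n' <= N)%nat -> Rabs (Sn L K b n' (x, y1) - Sn L K b n' (x, y2)) <= L0 * / 4 ^ (K + N)).
  { intros n' Hn'. assert (h := Sn_lipy L K b L0 n' Hm' H0 Hb x y1 y2).
    assert (h5: 5 ^ n' <= 5 ^ N) by (apply Rle_pow; lra || auto).
    assert (hy0 := Rabs_pos (y1 - y2)).
    assert (L0 * 5 ^ n' * Rabs (y1 - y2) <= L0 * 5 ^ N * / mv L ^ (K + N)).
    { apply Rmult_le_compat. apply Rmult_le_pos; auto; apply pow_le; lra. auto. apply Rmult_le_compat_l; auto. auto. }
    lra. }
  assert (0 <= L0 * / 4 ^ (K + N)) by (apply Rmult_le_pos; auto; apply Rlt_le, Rinv_0_lt_compat; auto).
  destruct (le_lt_dec n N) as [hn|hn].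
  - assert (h := HyN n hn). lra.
  - assert (h := HyN N (le_n N)).
    assert (d1 := Sn_diff' L K b L0 N n (x,y1) Hm H0 Hb ltac:(lia)).
    assert (d2 := Sn_diff' L K b L0 N n (x,y2) Hm H0 Hb ltac:(lia)).
    apply Rabs_le. apply Rabs_le_inv in h. apply Rabs_le_inv in d1. apply Rabs_le_inv in d2. lra.
Qed.

Lemma cell_bounds L i a b x y : 0 < mv L -> in_cell L i a b x -> in_cell L i a b y ->
  Rabs (fst x - fst y) <= powerRZ 4 (-i) /\ Rabs (snd x - snd y) <= powerRZ (mv L) (-i).
Proof.
  unfold in_cell, m. intros _ [[h1 h2] [h3 h4]] [[h5 h6] [h7 h8]]. split; apply Rabs_le; lra.
Qed.

Lemma adm_of_fun L (f : R2 -> R) C : 0 < C ->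
  (forall u v, Rinf L u v -> f u = f v) ->
  (forall i a b x y, in_cell L i a b x -> in_cell L i a b y -> Rabs (f x - f y) <= C * powerRZ m (-i)) ->
  admissible L (fun u v => Rabs (f u - f v) / C).
Proof.
  intros HC Hinv Hcell. split; [split; [|split; [|split; [|split]]]|].
  - intros p p' q q' H1 H2. rewrite (Hinv _ _ H1), (Hinv _ _ H2). reflexivity.
  - intros p q. apply Rmult_le_pos. apply Rabs_pos. apply Rlt_le, Rinv_0_lt_compat; auto.
  - intros p. rewrite Rminus_diag, Rabs_R0. unfold Rdiv. ring.
  - intros p q. rewrite Rabs_minus_sym. reflexivity.
  - intros p q r. unfold Rdiv. rewrite <- Rmult_plus_distr_r. apply Rmult_le_compat_r.
    apply Rlt_le, Rinv_0_lt_compat; auto.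
    replace (f p - f r) with ((f p - f q) + (f q - f r)) by ring. apply Rabs_triang.
  - intros i a b x y Hx Hy. apply (Rmult_le_reg_r C); auto. unfold Rdiv. rewrite Rmult_assoc, Rinv_l by lra.
    rewrite Rmult_1_r, Rmult_comm. apply Hcell with a b; auto.
Qed.

Lemma fF_cell L K b L0 M0 B0 : 300 <= mv L -> 0 <= L0 -> 0 <= M0 -> 0 <= B0 ->
  LipY b L0 -> LipX b M0 -> (forall z, Rabs (b z) <= B0) ->
  exists C, 0 < C /\ forall i a b' x y, in_cell L i a b' x -> in_cell L i a b' y ->
    Rabs (fF L K b x - fF L K b y) <= C * powerRZ m (-i).
Proof.
  intros Hm H0 HM HB Hb Hbx HbB. assert (Hm' : 0 < mv L) by lra.
  assert (Ha := a0_nonneg L K L0 Hm' H0).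
  assert (H4K: 0 < 4 ^ K) by (apply pow_lt; lra).
  exists (M0 + 34 * L0 + (2 * B0 + 4 * a0 L K L0) * 4 ^ K + 1). split.
  { assert (0 <= (2 * B0 + 4 * a0 L K L0) * 4 ^ K) by (apply Rmult_le_pos; lra). lra. }
  intros i a b' [x1 y1] [x2 y2] Hx Hy. unfold m.
  destruct (cell_bounds L i a b' _ _ Hm' Hx Hy) as [Dx Dy]. simpl in Dx, Dy.
  set (p := powerRZ 4 (-i)). assert (Hp: 0 < p) by (apply powerRZ_lt; lra).
  assert (e1 := fF_lipx L K b L0 M0 x1 x2 y1 Hm H0 HM Hb Hbx).
  assert (e1': Rabs (fF L K b (x1, y1) - fF L K b (x2, y1)) <= (M0 + 32 * L0) * p).
  { assert (h := Rabs_pos (x1 - x2)). apply Rle_trans with ((M0 + 32 * L0) * Rabs (x1 - x2)); auto.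
    apply Rmult_le_compat_l. lra. exact Dx. }
  assert (e2: Rabs (fF L K b (x2, y1) - fF L K b (x2, y2)) <= 2 * L0 * p + (2 * B0 + 4 * a0 L K L0) * 4 ^ K * p).
  { destruct (Z_le_gt_dec i (Z.of_nat K)) as [Hi|Hi].
    - assert (Hq: 1 <= 4 ^ K * p).
      { unfold p. rewrite pow_powerRZ, <- powerRZ_add by lra. rewrite powerRZ4_nonneg by lia.
        apply IZR_le. assert (0 < 4 ^ (Z.of_nat K + - i))%Z by (apply Z.pow_pos_nonneg; lia). lia. }
      assert (f1 := fF_near_b L K b L0 (x2,y1) Hm H0 Hb).
      assert (f2 := fF_near_b L K b L0 (x2,y2) Hm H0 Hb).
      assert (g1 := HbB (x2,y1)). assert (g2 := HbB (x2,y2)).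
      apply Rabs_le_inv in f1. apply Rabs_le_inv in f2. apply Rabs_le_inv in g1. apply Rabs_le_inv in g2.
      assert (0 <= 2 * L0 * p) by (apply Rmult_le_pos; lra).
      assert (2 * B0 + 4 * a0 L K L0 <= (2 * B0 + 4 * a0 L K L0) * (4 ^ K * p)).
      { rewrite <- (Rmult_1_r (2 * B0 + 4 * a0 L K L0)) at 1. apply Rmult_le_compat_l; lra. }
      apply Rabs_le. rewrite Rmult_assoc. lra.
    - set (N := (Z.to_nat i - K)%nat). assert (HiN: i = Z.of_nat (K + N)) by (unfold N; lia).
      assert (Ep: p = / 4 ^ (K + N)) by (unfold p; rewrite HiN, powerRZ_neg', <- pow_powerRZ; reflexivity).
      assert (Eq: powerRZ (mv L) (-i) = / mv L ^ (K + N)) by (rewrite HiN, powerRZ_neg', <- pow_powerRZ; reflexivity).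
      rewrite Eq in Dy.
      assert (h := fF_y_fine L K b L0 N x2 y1 y2 Hm H0 Hb Dy). rewrite <- Ep in h.
      assert (0 <= (2 * B0 + 4 * a0 L K L0) * 4 ^ K * p) by (apply Rmult_le_pos; [apply Rmult_le_pos|]; lra). lra. }
  assert (h := Rabs_triang (fF L K b (x1, y1) - fF L K b (x2, y1)) (fF L K b (x2, y1) - fF L K b (x2, y2))).
  replace (fF L K b (x1, y1) - fF L K b (x2, y1) + (fF L K b (x2, y1) - fF L K b (x2, y2))) with (fF L K b (x1, y1) - fF L K b (x2, y2)) in h by ring.
  assert (HH: (M0 + 32 * L0) * p + (2 * L0 * p + (2 * B0 + 4 * a0 L K L0) * 4 ^ K * p) <= (M0 + 34 * L0 + (2 * B0 + 4 * a0 L K L0) * 4 ^ K + 1) * p) by nra.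
  lra.
Qed.

Lemma Rmin1_lip a b : Rabs (Rmin 1 a - Rmin 1 b) <= Rabs (a - b).
Proof.
  assert (h1 := Rle_abs (a-b)). assert (h2 := Rle_abs (b-a)). rewrite (Rabs_minus_sym b a) in h2.
  assert (h3 := Rabs_pos (a - b)).
  unfold Rmin; repeat destruct (Rle_dec _ _); apply Rabs_le; lra.
Qed.

Lemma sep_generic L (K:nat) (r Lv : R) (v : R -> R) (x0 y0 y1 : R) :
  300 <= mv L -> 0 < r -> 0 <= Lv ->
  (forall y y', Rabs (v y - v y') <= Lv * Rabs (y - y')) ->
  (forall y, 0 <= v y <= 1) -> v y0 = 0 -> 8 * Lv / mv L ^ (K+1) < v y1 ->
  (forall k kk i, (k < Z.of_nat K)%Z -> (1 <= i <= 3)%Z -> lineX k kk i <> x0 -> r <= Rabs (lineX k kk i - x0)) ->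
  (forall k kk (l i:Z) y, (k < Z.of_nat K)%Z -> (1 <= i <= 3)%Z -> lineX k kk i = x0 ->
     (3 * IZR l + IZR i - 1) / mv L <= y <= (3 * IZR l + IZR i) / mv L ->
     v (powerRZ (mv L) (-k) * y) = v (powerRZ (mv L) (-k) * (y + / mv L))) ->
  exists d, admissible L d /\ 0 < d (x0,y0) (x0,y1).
Proof.
  intros Hm Hr HLv Hvl Hv01 Hv0 Hbig Hgap Hwin.
  assert (Hm' : 0 < mv L) by lra.
  set (b := fun z : R2 => Rmax 0 (r - Rabs (fst z - x0)) * v (snd z)).
  assert (Hw: forall x, 0 <= Rmax 0 (r - Rabs (x - x0)) <= r).
  { intros x. assert (h:=Rabs_pos (x - x0)). unfold Rmax; destruct (Rle_dec _ _); lra. }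
  assert (HbY: LipY b (r * Lv)).
  { intros x u1 u2. unfold b; simpl. rewrite <- Rmult_minus_distr_l, Rabs_mult, Rabs_right by (apply Rle_ge, Hw).
    rewrite Rmult_assoc. apply Rmult_le_compat; try apply Hw; auto. apply Rabs_pos. }
  assert (HbX: LipX b 1).
  { intros u1 u2 y. unfold b; simpl. rewrite <- Rmult_minus_distr_r, Rabs_mult.
    rewrite (Rabs_right (v y)) by (apply Rle_ge, Hv01).
    assert (hw: Rabs (Rmax 0 (r - Rabs (u1 - x0)) - Rmax 0 (r - Rabs (u2 - x0))) <= Rabs (u1 - u2)).
    { assert (h := Rabs_triang_inv (u1 - x0) (u2 - x0)). assert (h' := Rabs_triang_inv (u2 - x0) (u1 - x0)).
      replace (u1 - x0 - (u2 - x0)) with (u1 - u2) in h by ring.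
      replace (u2 - x0 - (u1 - x0)) with (u2 - u1) in h' by ring. rewrite (Rabs_minus_sym u2 u1) in h'.
      unfold Rmax; repeat destruct (Rle_dec _ _); apply Rabs_le; lra. }
    destruct (Hv01 y). assert (h := Rabs_pos (Rmax 0 (r - Rabs (u1 - x0)) - Rmax 0 (r - Rabs (u2 - x0)))). nra. }
  assert (HbB: forall z, Rabs (b z) <= r).
  { intros z. unfold b. rewrite Rabs_right by (apply Rle_ge, Rmult_le_pos; [apply Hw|apply Hv01]).
    destruct (Hw (fst z)), (Hv01 (snd z)). nra. }
  assert (HL0: 0 <= r * Lv) by nra.
  assert (Hbc: forall k p q, (k < Z.of_nat K)%Z -> gen0 L p q -> b (Phi_pow L k p) = b (Phi_pow L k q)).
  { intros k p q Hk Hg. destruct (Phi_gen0 L k p q Hg) as [kk [l [i [Hi [Hy [Ep Eq]]]]]].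
    rewrite Ep, Eq. unfold b; simpl.
    destruct (Req_dec (lineX k kk i) x0) as [E|E].
    - rewrite (Hwin k kk l i (snd p)); auto.
    - assert (h := Hgap k kk i Hk Hi E). replace (Rmax 0 (r - Rabs (lineX k kk i - x0))) with 0.
      ring. unfold Rmax; destruct (Rle_dec _ _); lra. }
  set (f := fF L K b).
  assert (Hinv: forall u w, Rinf L u w -> f u = f w).
  { apply inv_Rinf. apply (fF_invariant L K b (r * Lv)); auto. }
  destruct (fF_cell L K b (r * Lv) 1 r Hm HL0 ltac:(lra) ltac:(lra) HbY HbX HbB) as [C [HC Hcell]].
  exists (fun u w => Rabs (f u - f w) / C). split.
  - apply adm_of_fun; auto.
  - apply Rdiv_lt_0_compat; auto.
    assert (n1 := fF_near_b L K b (r * Lv) (x0,y0) Hm HL0 HbY).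
    assert (n2 := fF_near_b L K b (r * Lv) (x0,y1) Hm HL0 HbY).
    assert (bp: b (x0,y0) = 0) by (unfold b; simpl; rewrite Hv0; ring).
    assert (bq: b (x0,y1) = r * v y1).
    { unfold b; simpl. rewrite Rminus_diag, Rabs_R0. unfold Rmax; destruct (Rle_dec _ _); lra. }
    rewrite bp in n1. rewrite bq in n2. fold f in n1, n2.
    apply Rabs_le_inv in n1. apply Rabs_le_inv in n2.
    assert (Ea: 2 * a0 L K (r * Lv) = r * (4 * Lv / mv L ^ (K + 1))) by (unfold a0; unfold Rdiv; ring).
    assert (hb: r * (8 * Lv / mv L ^ (K+1)) < r * v y1) by (apply Rmult_lt_compat_l; auto).
    assert (Ea2: r * (8 * Lv / mv L ^ (K + 1)) = 2 * (r * (4 * Lv / mv L ^ (K + 1)))) by (unfold Rdiv; ring).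
    rewrite Rabs_left1; lra.
Qed.

Lemma big_pow L X : 300 <= mv L -> exists N, forall n, (N <= n)%nat -> X < mv L ^ n.
Proof.
  intros Hm. assert (Hx: 0 < Rabs X + 1) by (assert (h:=Rabs_pos X); lra).
  destruct (pow_lt_1_zero (/ mv L)) with (y := / (Rabs X + 1)) as [N HN].
  { rewrite Rabs_right. apply (Rmult_lt_reg_l (mv L)); [lra|]. rewrite Rinv_r by lra. lra.
    apply Rle_ge, Rlt_le, Rinv_0_lt_compat; lra. }
  { apply Rinv_0_lt_compat; auto. }
  exists N. intros n Hn. assert (h := HN n Hn). rewrite pow_inv in h.
  assert (hp: 0 < mv L ^ n) by (apply pow_lt; lra).
  rewrite Rabs_right in h by (apply Rle_ge, Rlt_le, Rinv_0_lt_compat; auto).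
  destruct (Rlt_le_dec (Rabs X + 1) (mv L ^ n)) as [H|H].
  - assert (h2 := Rle_abs X). lra.
  - exfalso. assert (/ (Rabs X + 1) <= / mv L ^ n) by (apply Rinv_le_contravar; auto). lra.
Qed.

Lemma step_rel L k0 kk0 i0 (t:R) (l:Z) : 300 <= mv L -> (1 <= i0 <= 3)%Z -> 3 * IZR l <= t <= 3 * IZR l + 1 ->
  Rinf L (lineX k0 kk0 i0, dl L k0 * (t + IZR i0 - 1)) (lineX k0 kk0 i0, dl L k0 * (t + 1 + IZR i0 - 1)).
Proof.
  intros Hm Hi Ht. apply rst_step. exists k0.
  exists (IZR kk0 + IZR i0 / 4, (t + IZR i0 - 1) / mv L).
  exists (IZR kk0 + IZR i0 / 4, (t + IZR i0 - 1) / mv L + / mv L).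
  split; [|split].
  - apply rst_step. exists kk0, l, i0. split; auto. split; [split|].
    + reflexivity.
    + simpl. unfold Rdiv. split; apply Rmult_le_compat_r; try (apply Rlt_le, Rinv_0_lt_compat; lra); lra.
    + reflexivity.
  - unfold Phi_pow, lineX, m, dl. simpl. f_equal. field. lra.
  - unfold Phi_pow, lineX, m, dl. simpl. f_equal. field. lra.
Qed.

Lemma caseB_rel L k0 kk0 i0 y0 y1 (d:Z) : 300 <= mv L -> (1 <= i0 <= 3)%Z ->
  piF L k0 i0 y1 = piF L k0 i0 y0 -> y1 - y0 = dl L k0 * IZR d ->
  Rinf L (lineX k0 kk0 i0, y0) (lineX k0 kk0 i0, y1).
Proof.
  intros Hm Hi Hp Hd. assert (Hm' : 0 < mv L) by lra. assert (Hδ := dl_pos L k0 Hm').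
  set (δ := dl L k0) in *. set (s := IZR i0) in *.
  set (t0 := y0 / δ - (s - 1)). set (t1 := y1 / δ - (s - 1)).
  assert (E0: y0 = δ * (t0 + s - 1)) by (unfold t0; field; lra).
  assert (E1: y1 = δ * (t1 + s - 1)) by (unfold t1; field; lra).
  assert (Et: t1 = t0 + IZR d) by (unfold t0, t1; apply (Rmult_eq_reg_l δ); [|lra];
    replace (δ * (y1 / δ - (s - 1))) with (y1 - δ * (s - 1)) by (field; lra);
    replace (δ * (y0 / δ - (s - 1) + IZR d)) with (y0 - δ * (s-1) + δ * IZR d) by (field; lra); lra).
  unfold piF in Hp. fold δ s in Hp. fold t0 t1 in Hp.
  assert (Htau: tau t1 = tau t0) by (apply (Rmult_eq_reg_l δ); lra).
  destruct (tau_eq_inv t1 t0 Htau) as [Heq|[l [W1 W0]]].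
  - assert (y1 = y0) by (rewrite E0, E1, Heq; reflexivity). rewrite H. apply rst_refl.
  - assert (Hd2: (-2 <= d <= 2)%Z).
    { split; apply le_IZR; simpl; lra. }
    rewrite E0, E1, Et. clear E0 E1 Hp Htau.
    replace (δ * (t0 + IZR d + s - 1)) with (δ * (t0 + IZR d + IZR i0 - 1)) by reflexivity.
    replace (δ * (t0 + s - 1)) with (δ * (t0 + IZR i0 - 1)) by reflexivity.
    assert (Hc: (d = -2 \/ d = -1 \/ d = 0 \/ d = 1 \/ d = 2)%Z) by lia.
    destruct Hc as [ -> | [ -> | [ -> | [ -> | -> ]]]]; simpl IZR in *.
    + apply rst_sym. eapply rst_trans.
      * replace (t0 + -2 + IZR i0 - 1) with ((t0 - 2) + IZR i0 - 1) by ring. apply (step_rel L k0 kk0 i0 (t0-2) l); auto; lra.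
      * replace (t0 - 2 + 1 + IZR i0 - 1) with ((t0 - 1) + IZR i0 - 1) by ring.
        replace (t0 + IZR i0 - 1) with ((t0 - 1) + 1 + IZR i0 - 1) by ring.
        apply (step_rel L k0 kk0 i0 (t0-1) l); auto; lra.
    + apply rst_sym. replace (t0 + -1 + IZR i0 - 1) with ((t0 - 1) + IZR i0 - 1) by ring.
      replace (t0 + IZR i0 - 1) with ((t0 - 1) + 1 + IZR i0 - 1) by ring.
      apply (step_rel L k0 kk0 i0 (t0-1) l); auto; lra.
    + replace (t0 + 0 + IZR i0 - 1) with (t0 + IZR i0 - 1) by ring. apply rst_refl.
    + apply (step_rel L k0 kk0 i0 t0 l); auto; lra.
    + eapply rst_trans.
      * apply (step_rel L k0 kk0 i0 t0 l); auto; lra.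
      * replace (t0 + 2 + IZR i0 - 1) with ((t0 + 1) + 1 + IZR i0 - 1) by ring.
        apply (step_rel L k0 kk0 i0 (t0+1) l); auto; lra.
Qed.

Lemma mv_ge L : (100 <= L)%nat -> 300 <= mv L.
Proof. intros H. unfold mv. apply le_INR in H. replace (INR 100) with 100 in H by (simpl; lra). lra. Qed.

Lemma choose_K (L:nat) (X:R) (k0:Z) : 300 <= mv L -> exists K:nat, X < mv L ^ (K+1) /\ (k0 < Z.of_nat K)%Z.
Proof.
  intros Hm. destruct (big_pow L X Hm) as [N HN].
  exists (Nat.max N (Z.to_nat (k0 + 1))). split. apply HN. lia. lia.
Qed.

Lemma gap_K (L:nat) (K:nat) x0 : exists r, 0 < r /\ forall k kk i, (k < Z.of_nat K)%Z -> (1 <= i <= 3)%Z ->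
  lineX k kk i <> x0 -> r <= Rabs (lineX k kk i - x0).
Proof.
  destruct (gap_lemma x0 (Z.of_nat K)) as [r [Hr Hg]]. exists r. split; auto.
  intros k kk i Hk Hi Hne. rewrite (lineX_coarse (Z.of_nat K)) in * by auto. apply Hg. auto.
Qed.

Lemma sep L : (100 <= L)%nat -> forall p q, ~ Rinf L p q -> exists d, admissible L d /\ 0 < d p q.
Proof.
  intros HL [x0 y0] [x1 y1] Hn. assert (Hm := mv_ge L HL). assert (Hm' : 0 < mv L) by lra.
  destruct (Req_dec x0 x1) as [Ex|Ex].
  2: { exists (fun u v => Rabs (fst u - fst v) / 1). split.
       - apply adm_of_fun. lra. apply Rinf_fst.
         intros i a b x y Hx Hy. destruct (cell_bounds L i a b x y Hm' Hx Hy). unfold m. lra.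
       - simpl. apply Rdiv_lt_0_compat; [|lra]. apply Rabs_pos_lt. lra. }
  subst x1.
  destruct (classic (exists k0 kk0 i0, (1 <= i0 <= 3)%Z /\ lineX k0 kk0 i0 = x0)) as [[k0 [kk0 [i0 [Hi Hx]]]]|HA].
  -
    set (δ := dl L k0). assert (Hδ: 0 < δ) by (apply dl_pos; auto).
    set (v := fun y => Rmin 1 (Rabs (piF L k0 i0 y - piF L k0 i0 y0) + δ * dZ ((y - y0) / δ))).
    assert (Hv01: forall y, 0 <= v y <= 1).
    { intros y. unfold v. assert (h1 := Rabs_pos (piF L k0 i0 y - piF L k0 i0 y0)).
      assert (h2 := dZ_nonneg ((y - y0) / δ)). assert (0 <= δ * dZ ((y - y0) / δ)) by nra.
      unfold Rmin; destruct (Rle_dec _ _); lra. }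
    assert (Hv0: v y0 = 0).
    { unfold v. rewrite Rminus_diag, Rabs_R0. replace ((y0 - y0) / δ) with (IZR 0) by (simpl; field; lra).
      unfold dZ. rewrite ip_IZR. unfold Rmin; repeat destruct (Rle_dec _ _); lra. }
    assert (Hvl: forall y y', Rabs (v y - v y') <= 4 * Rabs (y - y')).
    { intros y y'. unfold v. eapply Rle_trans. apply Rmin1_lip.
      assert (h1 := Rabs_triang_inv (piF L k0 i0 y - piF L k0 i0 y0) (piF L k0 i0 y' - piF L k0 i0 y0)).
      assert (h1' := Rabs_triang_inv (piF L k0 i0 y' - piF L k0 i0 y0) (piF L k0 i0 y - piF L k0 i0 y0)).
      replace (piF L k0 i0 y - piF L k0 i0 y0 - (piF L k0 i0 y' - piF L k0 i0 y0)) with (piF L k0 i0 y - piF L k0 i0 y') in h1 by ring.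
      replace (piF L k0 i0 y' - piF L k0 i0 y0 - (piF L k0 i0 y - piF L k0 i0 y0)) with (piF L k0 i0 y' - piF L k0 i0 y) in h1' by ring.
      assert (hsym: Rabs (piF L k0 i0 y' - piF L k0 i0 y) = Rabs (piF L k0 i0 y - piF L k0 i0 y')) by apply Rabs_minus_sym.
      assert (h2 := piF_lip L k0 i0 y y' Hm').
      assert (h3 := dZ_lip ((y - y0) / δ) ((y' - y0) / δ)).
      replace ((y - y0) / δ - (y' - y0) / δ) with ((y - y') / δ) in h3 by (field; lra).
      unfold Rdiv in h3. rewrite Rabs_mult, (Rabs_right (/ δ)) in h3 by (apply Rle_ge, Rlt_le, Rinv_0_lt_compat; lra).
      assert (h4: δ * Rabs (dZ ((y - y0) * / δ) - dZ ((y' - y0) * / δ)) <= Rabs (y - y')).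
      { apply (Rmult_le_compat_l δ) in h3; [|lra]. replace (δ * (Rabs (y - y') * / δ)) with (Rabs (y - y')) in h3 by (field; lra). exact h3. }
      unfold Rdiv. apply Rabs_le.
assert (Hd2: δ * dZ ((y - y0) * / δ) - δ * dZ ((y' - y0) * / δ) = δ * (dZ ((y - y0) * / δ) - dZ ((y' - y0) * / δ))) by ring.
      assert (δ * Rabs (dZ ((y - y0) * / δ) - dZ ((y' - y0) * / δ)) >= δ * (dZ ((y - y0) * / δ) - dZ ((y' - y0) * / δ))).
      { apply Rle_ge, Rmult_le_compat_l; [lra|apply Rle_abs]. }
      assert (δ * Rabs (dZ ((y - y0) * / δ) - dZ ((y' - y0) * / δ)) >= - (δ * (dZ ((y - y0) * / δ) - dZ ((y' - y0) * / δ)))).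
      { apply Rle_ge. rewrite Ropp_mult_distr_r. apply Rmult_le_compat_l; [lra|]. rewrite <- Rabs_Ropp. apply Rle_abs. }
      split; lra. }
    assert (Hvq: 0 < v y1).
    { destruct (Hv01 y1) as [h _]. destruct (Rle_lt_or_eq_dec _ _ h) as [h'|h']; auto. exfalso. apply Hn.
      assert (g0: Rabs (piF L k0 i0 y1 - piF L k0 i0 y0) + δ * dZ ((y1 - y0) / δ) = 0).
      { unfold v in h'. unfold Rmin in h'. destruct (Rle_dec _ _); lra. }
      assert (h1 := Rabs_pos (piF L k0 i0 y1 - piF L k0 i0 y0)).
      assert (h2 := dZ_nonneg ((y1 - y0) / δ)). assert (0 <= δ * dZ ((y1 - y0) / δ)) by nra.
      assert (e1: piF L k0 i0 y1 = piF L k0 i0 y0).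
      { assert (Rabs (piF L k0 i0 y1 - piF L k0 i0 y0) = 0) by lra.
        destruct (Req_dec (piF L k0 i0 y1 - piF L k0 i0 y0) 0). lra. exfalso. apply Rabs_no_R0 in H1. auto. }
      assert (e2: dZ ((y1 - y0) / δ) = 0).
      { assert (δ * dZ ((y1 - y0) / δ) = 0) by lra. destruct (Rmult_integral _ _ H0); lra. }
      apply dZ_zero in e2. rewrite <- Hx. apply (caseB_rel L k0 kk0 i0 y0 y1 (ip ((y1 - y0) / δ))); auto.
      fold δ. rewrite <- e2. field. lra. }
    destruct (choose_K L (8 * 4 / v y1) k0 Hm) as [K [HK1 HK2]].
    destruct (gap_K L K x0) as [r [Hr Hgap]].
    apply (sep_generic L K r 4 v x0 y0 y1 Hm Hr ltac:(lra) Hvl Hv01 Hv0).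
    + assert (hp: 0 < mv L ^ (K+1)) by (apply pow_lt; lra).
      apply (Rmult_lt_compat_r (v y1)) in HK1; auto.
      replace (8 * 4 / v y1 * v y1) with (8 * 4) in HK1 by (field; lra).
      apply (Rmult_lt_reg_r (mv L ^ (K+1))); auto. unfold Rdiv. rewrite Rmult_assoc, Rinv_l by lra. lra.
    + exact Hgap.
    + intros k kk l i y Hk Hi' Hx' Hy. rewrite <- Hx in Hx'.
      destruct (lineX_unique k kk i k0 kk0 i0 Hi' Hi Hx') as [-> ->].
      unfold v. rewrite <- (piF_window L k0 l i0 y Hm' Hy).
      replace ((powerRZ (mv L) (- k0) * (y + / mv L) - y0) / δ) with ((powerRZ (mv L) (- k0) * y - y0) / δ + 1).
      rewrite dZ_plus1. reflexivity.
      unfold δ, dl. field. split. lra. apply powerRZ_NOR. lra.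
  -
    set (v := fun y => Rmin 1 (Rabs (y - y0))).
    assert (Hne: y1 <> y0). { intros ->. apply Hn. apply rst_refl. }
    assert (Hvq: 0 < v y1).
    { unfold v. assert (0 < Rabs (y1 - y0)) by (apply Rabs_pos_lt; lra). unfold Rmin; destruct (Rle_dec _ _); lra. }
    destruct (choose_K L (8 * 1 / v y1) 0 Hm) as [K [HK1 _]].
    destruct (gap_K L K x0) as [r [Hr Hgap]].
    apply (sep_generic L K r 1 v x0 y0 y1 Hm Hr ltac:(lra)).
    + intros y y'. unfold v. rewrite Rmult_1_l. eapply Rle_trans. apply Rmin1_lip.
      assert (h1 := Rabs_triang_inv (y - y0) (y' - y0)).
      assert (h1' := Rabs_triang_inv (y' - y0) (y - y0)).
      replace (y - y0 - (y' - y0)) with (y - y') in h1 by ring.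
      replace (y' - y0 - (y - y0)) with (y' - y) in h1' by ring.
      rewrite (Rabs_minus_sym y' y) in h1'. apply Rabs_le. lra.
    + intros y. unfold v. assert (h:=Rabs_pos (y - y0)). unfold Rmin; destruct (Rle_dec _ _); lra.
    + unfold v. rewrite Rminus_diag, Rabs_R0. unfold Rmin; destruct (Rle_dec _ _); lra.
    + assert (hp: 0 < mv L ^ (K+1)) by (apply pow_lt; lra).
      apply (Rmult_lt_compat_r (v y1)) in HK1; auto.
      replace (8 * 1 / v y1 * v y1) with (8 * 1) in HK1 by (field; lra).
      apply (Rmult_lt_reg_r (mv L ^ (K+1))); auto. unfold Rdiv. rewrite Rmult_assoc, Rinv_l by lra. lra.
    + exact Hgap.
    + intros k kk l i y Hk Hi' Hx' Hy. exfalso. apply HA. exists k, kk, i. auto.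
Qed.

Lemma big_pow_gen c X : 1 < c -> exists N, forall n, (N <= n)%nat -> X < c ^ n.
Proof.
  intros Hc. assert (Hx: 0 < Rabs X + 1) by (assert (h:=Rabs_pos X); lra).
  destruct (pow_lt_1_zero (/ c)) with (y := / (Rabs X + 1)) as [N HN].
  { rewrite Rabs_right. apply (Rmult_lt_reg_l c); [lra|]. rewrite Rinv_r by lra. lra.
    apply Rle_ge, Rlt_le, Rinv_0_lt_compat; lra. }
  { apply Rinv_0_lt_compat; auto. }
  exists N. intros n Hn. assert (h := HN n Hn). rewrite pow_inv in h.
  assert (hp: 0 < c ^ n) by (apply pow_lt; lra).
  rewrite Rabs_right in h by (apply Rle_ge, Rlt_le, Rinv_0_lt_compat; auto).
  destruct (Rlt_le_dec (Rabs X + 1) (c ^ n)) as [H|H].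
  - assert (h2 := Rle_abs X). lra.
  - exfalso. assert (/ (Rabs X + 1) <= / c ^ n) by (apply Rinv_le_contravar; auto). lra.
Qed.

Lemma Rj_Rinf L j u v : Rj L j u v -> Rinf L u v.
Proof.
  intros H. induction H as [u v [i [_ Hp]]| | |].
  - apply rst_step. exists i. auto.
  - apply rst_refl.
  - apply rst_sym; auto.
  - eapply rst_trans; eauto.
Qed.

Lemma cell_exists L j z : 0 < mv L -> exists a b, in_cell L j a b z.
Proof.
  intros Hm. destruct z as [x y].
  set (c := powerRZ m (-j)). set (c' := powerRZ (mv L) (-j)).
  assert (Hc: 0 < c) by (apply powerRZ_lt; unfold m; lra).
  assert (Hc': 0 < c') by (apply powerRZ_lt; lra).
  exists (ip (x / c)), (ip (y / c')). unfold in_cell. fold c c'. simpl.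
  destruct (ip_spec (x/c)) as [a1 a2]. destruct (ip_spec (y/c')) as [b1 b2].
  apply (Rmult_le_compat_r c) in a1; [|lra]. apply (Rmult_lt_compat_r c) in a2; [|lra].
  apply (Rmult_le_compat_r c') in b1; [|lra]. apply (Rmult_lt_compat_r c') in b2; [|lra].
  replace (x / c * c) with x in * by (field; lra). replace (y / c' * c') with y in * by (field; lra).
  lra.
Qed.

Lemma adm0 L : admissible L (fun _ _ => 0).
Proof.
  split; [split; [|split; [|split; [|split]]]|]; intros; try lra.
  apply powerRZ_le. unfold m; lra.
Qed.

Definition Eset L p q := fun r => exists d, admissible L d /\ r = d p q.

Lemma origin_cell L z : 300 <= mv L -> exists N:nat, exists a b, in_cell L (- Z.of_nat N) a b z /\ in_cell L (- Z.of_nat N) a b (0,0).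
Proof.
  intros Hm. destruct z as [x y].
  destruct (big_pow_gen 4 (Rabs x) ltac:(lra)) as [N1 H1].
  destruct (big_pow_gen (mv L) (Rabs y) ltac:(lra)) as [N2 H2].
  set (N := Nat.max N1 N2). exists N.
  assert (h1 := H1 N ltac:(lia)). assert (h2 := H2 N ltac:(lia)).
  assert (E1: powerRZ m (- - Z.of_nat N) = 4 ^ N) by (rewrite Z.opp_involutive, <- pow_powerRZ; reflexivity).
  assert (E2: powerRZ (mv L) (- - Z.of_nat N) = mv L ^ N) by (rewrite Z.opp_involutive, <- pow_powerRZ; reflexivity).
  assert (hx1 := Rle_abs x). assert (hx2 := Rle_abs (-x)). rewrite Rabs_Ropp in hx2.
  assert (hy1 := Rle_abs y). assert (hy2 := Rle_abs (-y)). rewrite Rabs_Ropp in hy2.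
  assert (p1: 0 < 4 ^ N) by (apply pow_lt; lra). assert (p2: 0 < mv L ^ N) by (apply pow_lt; lra).
  exists (if Rle_dec 0 x then 0%Z else (-1)%Z), (if Rle_dec 0 y then 0%Z else (-1)%Z).
  unfold in_cell. rewrite E1, E2. simpl.
  destruct (Rle_dec 0 x), (Rle_dec 0 y); simpl IZR; lra.
Qed.

Lemma Eset_bound L (HL: (100 <= L)%nat) p q : bound (Eset L p q).
Proof.
  assert (Hm := mv_ge L HL).
  destruct (origin_cell L p Hm) as [N1 [a1 [b1 [P1 O1]]]].
  destruct (origin_cell L q Hm) as [N2 [a2 [b2 [P2 O2]]]].
  exists (powerRZ m (- - Z.of_nat N1) + powerRZ m (- - Z.of_nat N2)).
  intros r [d [[[Hi [Hn [Hr [Hs Ht]]]] Hc] ->]].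
  assert (e1 := Hc _ _ _ _ _ P1 O1). assert (e2 := Hc _ _ _ _ _ P2 O2).
  assert (e3 := Ht p (0,0) q). rewrite (Hs (0,0) q) in e3. lra.
Qed.

Lemma Eset_ne L p q : exists r, Eset L p q r.
Proof. exists 0. exists (fun _ _ => 0). split; auto. apply adm0. Qed.

Lemma lub_ext E1 E2 m1 m2 : (forall r, E1 r <-> E2 r) -> is_lub E1 m1 -> is_lub E2 m2 -> m1 = m2.
Proof.
  intros H [U1 L1] [U2 L2]. apply Rle_antisym.
  - apply L1. intros r Hr. apply U2, H, Hr.
  - apply L2. intros r Hr. apply U1, H, Hr.
Qed.

Lemma dhat_exists L : (100 <= L)%nat -> exists d, is_dhat_inf L d.
Proof.
  intros HL.
  set (D := fun p q => proj1_sig (completeness (Eset L p q) (Eset_bound L HL p q) (Eset_ne L p q))).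
  assert (HD: forall p q, is_lub (Eset L p q) (D p q)).
  { intros p q. unfold D. destruct (completeness _ _ _) as [x Hx]. exact Hx. }
  assert (Zin: forall p q, Eset L p q 0). { intros p q. exists (fun _ _ => 0). split; auto. apply adm0. }
  exists D. split; [split; [split; [|split; [|split; [|split]]]|]|].
  - intros p p' q q' H1 H2. apply (lub_ext (Eset L p q) (Eset L p' q')); auto.
    intros r; split; intros [d [Hd ->]]; exists d; split; auto; destruct Hd as [[Hi _] _];
      [apply Hi|symmetry; apply Hi]; auto.
  - intros p q. apply (HD p q). apply Zin.
  - intros p. apply Rle_antisym.
    + apply (HD p p). intros r [d [[[_ [_ [Hr _]]] _] ->]]. rewrite Hr. lra.
    + apply (HD p p). apply Zin.
  - intros p q. apply (lub_ext (Eset L p q) (Eset L q p)); auto.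
    intros r; split; intros [d [Hd ->]]; exists d; split; auto; destruct Hd as [[_ [_ [_ [Hs _]]]] _]; apply Hs.
  - intros p q r. apply (HD p r). intros x [d [Hd ->]].
    assert (Hd' := Hd). destruct Hd' as [[_ [_ [_ [_ Ht]]]] _].
    assert (h1: d p q <= D p q) by (apply (HD p q); exists d; auto).
    assert (h2: d q r <= D q r) by (apply (HD q r); exists d; auto).
    assert (h3 := Ht p q r). lra.
  - intros i a b x y Hx Hy. apply (HD x y). intros r [d [Hd ->]].
    destruct Hd as [_ Hc]. apply (Hc i a b); auto.
  - intros d Hd p q. apply (HD p q). exists d; auto.
Qed.

Lemma part1 L : (100 <= L)%nat -> forall p0 p1 : R2, (exists j : Z, inJ L p0 p1 j) <-> ~ Rinf L p0 p1.
Proof.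
  intros HL p0 p1. assert (Hm := mv_ge L HL). split.
  - intros [j Hj] HR. apply Hj. destruct (cell_exists L j p0 ltac:(lra)) as [a [b Hc]].
    exists a, b, a, b. split; [|split].
    + exists p0, p0. split; auto. split; auto. apply rst_refl.
    + exists p0. split; auto. apply rst_refl.
    + exists p0. split; auto.
  - intros Hn. destruct (sep L HL p0 p1 Hn) as [d [[[Hinv [Hnn [Hr [Hs Ht]]]] Hc] Hpos]].
    apply NNPP. intros Hno.
    assert (B: forall j, d p0 p1 <= 2 * powerRZ m (-j)).
    { intros j. assert (Hj: ~ inJ L p0 p1 j) by (intros H; apply Hno; exists j; auto).
      unfold inJ in Hj. apply NNPP in Hj.
      destruct Hj as [a0 [b0 [a1 [b1 [[x [y [Hx [Hy Hxy]]]] [[z [Hz Hzp]] [w [Hw Hwp]]]]]]]].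
      rewrite <- (Hinv z p0 w p1 Hzp Hwp).
      assert (e0: d x y = 0) by (rewrite (Hinv x y y y (Rj_Rinf L j x y Hxy) (rst_refl _ _ y)); apply Hr).
      assert (e1 := Hc j a0 b0 z x Hz Hx). assert (e2 := Hc j a1 b1 y w Hy Hw).
      assert (t1 := Ht z x w). assert (t2 := Ht x y w). lra. }
    destruct (pow_lt_1_zero (/4) ltac:(rewrite Rabs_right; lra) (d p0 p1 / 2) ltac:(lra)) as [N HN].
    assert (h := HN N (le_n N)). rewrite Rabs_right in h by (apply Rle_ge, pow_le; lra).
    assert (h2 := B (Z.of_nat N)). unfold m in h2. rewrite powerRZ_neg', <- pow_powerRZ, <- pow_inv in h2.
    lra.
Qed.

Theorem mainTheorem11 (L : nat) (HL : (100 <= L)%nat) :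
  (forall p0 p1 : R2, (exists j : Z, inJ L p0 p1 j) <-> ~ Rinf L p0 p1) /\
  ((exists d, is_dhat_inf L d) /\
   (forall d, is_dhat_inf L d -> forall p q, d p q = 0 -> Rinf L p q)).
Proof.
  split; [apply part1; auto|split; [apply dhat_exists; auto|]].
  intros d [_ Hmax] p q H0. apply NNPP. intros Hn.
  destruct (sep L HL p q Hn) as [d' [Had Hpos]].
  assert (h := Hmax d' Had p q). lra.
Qed.
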